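(* Let $n\in\mathbb{N}$, $d_0,d_1,\dots,d_n\in\mathbb{N}$, $f_i\in C(\mathbb{R}^{d_i},\mathbb{R}^{d_{i-1}})$ for $i\in\{1,\dots,n\}$, and $\phi_1,\dots,\phi_n\in\mathbf{N}$ with $f_i=\mathcal{R}(\phi_i)$ for all $i\in\{1,\dots,n\}$. Then $$\Big|\Big|\Big|\bigodot_{i=1}^n\mathcal{D}(\phi_i)\Big|\Big|\Big|\le\max\big\{|||\mathcal{D}(\phi_1)|||,\dots,|||\mathcal{D}(\phi_n)|||,2d_1,2d_2,\dots,2d_{n-1}\big\}.$$
   Context: $\mathbf{A}_k\colon\mathbb{R}^k\to\mathbb{R}^k$ is the componentwise ReLU. $\mathbf{D}=\bigcup_{H\in\mathbb{N}}\mathbb{N}^{H+2}$; $\mathbf{N}=\bigcup_{H\in\mathbb{N}}\bigcup_{(k_0,\dots,k_{H+1})\in\mathbb{N}^{H+2}}\prod_{m=1}^{H+1}(\mathbb{R}^{k_m\times k_{m-1}}\times\mathbb{R}^{k_m})$. For $\Phi=((W_1,B_1),\dots,(W_{H+1},B_{H+1}))$ with $W_m\in\mathbb{R}^{k_m\times k_{m-1}}$, $B_m\in\mathbb{R}^{k_m}$: $\mathcal{D}(\Phi)=(k_0,\dots,k_{H+1})\in\mathbf{D}$ and $\mathcal{R}(\Phi)\in C(\mathbb{R}^{k_0},\mathbb{R}^{k_{H+1}})$, $(\mathcal{R}(\Phi))(x_0)=W_{H+1}x_H+B_{H+1}$ with $x_m=\mathbf{A}_{k_m}(W_mx_{m-1}+B_m)$,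 $m=1,\dots,H$. For $x=(x_1,\dots,x_k)$, $|||x|||=\max_i|x_i|$. The operation $\odot\colon\mathbf{D}\times\mathbf{D}\to\mathbf{D}$: for $\alpha=(\alpha_0,\dots,\alpha_{H_1+1})$, $\beta=(\beta_0,\dots,\beta_{H_2+1})$, $\alpha\odot\beta=(\beta_0,\beta_1,\dots,\beta_{H_2},\beta_{H_2+1}+\alpha_0,\alpha_1,\dots,\alpha_{H_1+1})$; $\odot$ is associative and $\bigodot_{i=1}^n\alpha_i=\alpha_1\odot\alpha_2\odot\dots\odot\alpha_n$. *)

(* Defs.v *)
From HB Require Import structures.
From mathcomp Require Import all_boot all_order all_algebra.
From mathcomp Require Import all_classical all_reals all_analysis.
Set Implicit Arguments. Unset Strict Implicit. Unset Printing Implicit Defensive.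
Import Order.TTheory GRing.Theory Num.Theory.
Local Open Scope ring_scope.

Section Nets.
Variable R : realType.

Definition relu (k : nat) (x : 'cV[R]_k) : 'cV[R]_k := map_mx (fun t => Num.max t 0) x.

Inductive layers : nat -> nat -> Type :=
| LOut (k0 k1 : nat) : 'M[R]_(k1, k0) -> 'cV[R]_k1 -> layers k0 k1
| LCons (k0 k1 k2 : nat) : 'M[R]_(k1, k0) -> 'cV[R]_k1 -> layers k1 k2 -> layers k0 k2.

Fixpoint arch (k0 k : nat) (L : layers k0 k) : seq nat :=
  match L with
  | @LOut a b _ _ => [:: a; b]
  | @LCons a _ _ _ _ L' => a :: arch L'
  end.

Fixpoint realize_layers (k0 k : nat) (L : layers k0 k) : 'cV[R]_k0 -> 'cV[R]_k :=
  match L with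
  | LOut _ _ W B => fun x => W *m x + B
  | LCons _ _ _ W B L' => fun x => realize_layers L' (relu (W *m x + B))
  end.

(* The set N of networks: H in N = {1,2,...} (so at least two layers, H+2 >= 3
   entries in the architecture) and all widths k_m in N = {1,2,...}. *)
Record net : Type := Net {
  net_in : nat;
  net_out : nat;
  net_layers : layers net_in net_out;
  net_wf : (3 <= size (arch net_layers))%N && all (fun k => 0 < k)%N (arch net_layers)
}.

Definition Dim (phi : net) : seq nat := arch (net_layers phi).

Definition realization (phi : net) : 'cV[R]_(net_in phi) -> 'cV[R]_(net_out phi) :=
  realize_layers (net_layers phi).

(* "g = R(phi)" for g : R^din -> R^dout, as an equality of functions including
   their domain and codomain. *)
Definition realizes (phi : net) (din dout : nat) (g : 'cV[R]_din -> 'cV[R]_dout) : Prop :=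
  existT (fun p : nat * nat => 'cV[R]_p.1 -> 'cV[R]_p.2) (din, dout) g
  = existT (fun p : nat * nat => 'cV[R]_p.1 -> 'cV[R]_p.2) (net_in phi, net_out phi) (@realization phi).

End Nets.

(* alpha ⊙ beta = (beta_0, ..., beta_{H2}, beta_{H2+1} + alpha_0, alpha_1, ..., alpha_{H1+1})
   (junk value on empty alpha, which never arises for elements of D). *)
Definition dcomp (alpha beta : seq nat) : seq nat :=
  match alpha with
  | [::] => beta
  | a0 :: atl => take (size beta).-1 beta ++ ((last 0%N beta + a0)%N :: atl)
  end.

(* bigodot_{i=1}^n alpha_i = alpha_1 ⊙ (alpha_2 ⊙ (... ⊙ alpha_n)) (⊙ is associative). *)
Fixpoint bigodot (s : seq (seq nat)) : seq nat :=
  match s with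
  | [::] => [::]
  | [:: a] => a
  | a :: s' => dcomp a (bigodot s')
  end.

Definition maxnorm (s : seq nat) : nat := \max_(x <- s) x.

(* Main.v *)
Require Import Defs.
From HB Require Import structures.
From mathcomp Require Import all_boot all_order all_algebra.
From mathcomp Require Import all_classical all_reals all_analysis.
Import Order.TTheory GRing.Theory Num.Theory.
Local Open Scope ring_scope.

Lemma arch_props (R : realType) k0 k (L : layers R k0 k) :
  exists tl, arch L = k0 :: tl /\ tl != [::] /\ last k0 tl = k.
Proof.
elim: L => [a b W B|a b c W B L [tl [e [ne l]]]] /=.
  by exists [:: b].
exists (b :: tl); split => //.
by rewrite e.
Qed.

Lemma maxnorm_le (s : seq nat) M : (maxnorm s <= M)%N = all (fun x => x <= M)%N s.
Proof. by rewrite /maxnorm; elim: s => [|a s IH]; rewrite ?big_nil ?big_cons //= geq_max IH. Qed.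

Lemma max_nat_ge a b (F : nat -> nat) k : (a <= k < b)%N -> (F k <= \max_(a <= i < b) F i)%N.
Proof. by move=> h; apply: leq_bigmax_seq => //; rewrite mem_index_iota. Qed.

Theorem lemma5p10 (R : realType) (n : nat) (d : nat -> nat)
  (f : forall i : nat, 'cV[R]_(d i) -> 'cV[R]_(d i.-1))
  (phi : nat -> net R) :
  (1 <= n)%N ->
  (forall i : nat, (i <= n)%N -> (0 < d i)%N) ->
  (forall i : nat, (1 <= i <= n)%N -> continuous (f i : 'cV[R^o]_(d i) -> 'cV[R^o]_(d i.-1))) ->
  (forall i : nat, (1 <= i <= n)%N -> realizes (phi i) (f i)) ->
  (maxnorm (bigodot [seq Dim (phi i) | i <- iota 1 n])
   <= maxn (\max_(1 <= i < n.+1) maxnorm (Dim (phi i)))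
           (\max_(1 <= i < n) (2 * d i)))%N.
Proof.
move=> n1 _ _ hr.
set M := maxn _ _.
have hD : forall i, (1 <= i <= n)%N ->
   exists tl, Dim (phi i) = d i :: tl /\ tl != [::] /\ last (d i) tl = d i.-1.
  move=> i hi; have := f_equal (@projT1 _ _) (hr i hi) => /= [[e1 e2]].
  rewrite /Dim; case: (@arch_props R _ _ (net_layers (phi i))) => tl [a [b c]].
  by exists tl; rewrite a e1 e2.
have hM : forall i, (1 <= i <= n)%N -> (maxnorm (Dim (phi i)) <= M)%N.
  move=> i hi; apply: leq_trans (leq_maxl _ _); exact: max_nat_ge.
pose B := fun k m => bigodot [seq Dim (phi i) | i <- iota k m.+1].
have B0 : forall k, B k 0%N = Dim (phi k) by [].
have BS : forall k m, B k m.+1 = Defs.dcomp (Dim (phi k)) (B k.+1 m) by [].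
suff: forall m k, (1 <= k)%N -> (k + m <= n)%N ->
  (maxnorm (B k m) <= M)%N /\ exists s, B k m = rcons s (d k.-1).
  by move=> /(_ n.-1 1%N (leqnn _)); rewrite /B prednK //; case => //; rewrite add1n prednK.
elim=> [|m IH] k k1 km.
  rewrite addn0 in km.
  rewrite B0 hM ?k1 //; split => //.
  have hk : (1 <= k <= n)%N by rewrite k1.
  have [tl [e [ne l]]] := hD k hk.
  by exists (belast (d k) tl); rewrite e lastI l.
have km' : (k.+1 + m <= n)%N by rewrite addSnnS.
have [eS1 [s es]] := IH k.+1 isT km'.
have hk : (1 <= k <= n)%N by rewrite k1 /=; apply: leq_trans km; rewrite leq_addr.
have [tl [e [ne l]]] := hD k hk.
rewrite BS e /= es size_rcons /= last_rcons -cats1 take_size_cat //; split.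
  rewrite maxnorm_le all_cat /= -!maxnorm_le; apply/and3P; split.
  - move: eS1; rewrite es maxnorm_le -cats1 all_cat => /andP[] ; by rewrite -maxnorm_le.
  - rewrite /= addnn -mul2n; apply: leq_trans (leq_maxr _ _); apply: max_nat_ge.
    by rewrite k1 /=; apply: leq_trans km; rewrite addnS ltnS leq_addr.
  - have := hM k hk; rewrite e maxnorm_le /=.
    by case/andP => _; rewrite -maxnorm_le.
exists (s ++ (d k + d k)%N :: belast (head 0%N tl) (behead tl)).
rewrite -cats1 -catA; congr (_ ++ _).
case: tl ne l {e} => // t tl _ /= <-.
by rewrite cats1 -lastI.
Qed.
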